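(* Let $\mathcal{L}$ be a set of points in $\mathrm{PG}(k-1,q)$, identified with one-dimensional vector subspaces (lines through the origin) of $\mathbb{F}_q^k$. Then $\mathcal{L}$ is a strong $(s-1)$-blocking set if and only if the set $B=\bigcup_{\ell\in\mathcal{L}}\ell\subseteq\mathbb{F}_q^k$ is an affine $s$-blocking set.
   Context: $\mathrm{PG}(k-1,q)$ is the projective space whose points, lines, ..., hyperplanes are the $1$-, $2$-, ..., $(k-1)$-dimensional vector subspaces of $\mathbb{F}_q^k$; codimension of a projective subspace equals the codimension of the corresponding vector subspace. For a set $S$ of points, $\langle S\rangle$ is the subspace they span. A strong $t$-blocking set in $\mathrm{PG}(k-1,q)$ is a set of points that meets every codimension-$t$ subspace in a set of points spanning that subspace. An affine $s$-blocking set in $\mathbb{F}_q^k$ is a set of points containing at least one point of every affine subspace (translate of a vector subspace) of dimension $k-s$. *)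

(* Defs.v *)
From HB Require Import structures.
From mathcomp Require Import all_boot all_order all_algebra all_field.
Set Implicit Arguments. Unset Strict Implicit. Unset Printing Implicit Defensive.
Import GRing.Theory.
Local Open Scope ring_scope.

Definition is_point (F : finFieldType) (k : nat) (P : {vspace 'rV[F]_k}) : bool :=
  \dim P == 1%N.

(* Span of the points of L lying in W: every point P is <[v]> for any
   nonzero v in P, so summing <[v]> over vectors v in W with <[v]> in L
   is the span of the points of L contained in W. *)
Definition span_of_points_in (F : finFieldType) (k : nat)
    (L : pred {vspace 'rV[F]_k}) (W : {vspace 'rV[F]_k}) : {vspace 'rV[F]_k} :=
  (\sum_(v : 'rV[F]_k | (<[v]>%VS \in L) && (v \in W)) <[v]>)%VS.

Definition strong_blocking (F : finFieldType) (k t : nat)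
    (L : pred {vspace 'rV[F]_k}) : Prop :=
  forall W : {vspace 'rV[F]_k}, \dim W = (k - t)%N ->
    span_of_points_in L W = W.

Definition union_points (F : finFieldType) (k : nat)
    (L : pred {vspace 'rV[F]_k}) (v : 'rV[F]_k) : Prop :=
  exists P : {vspace 'rV[F]_k}, P \in L /\ v \in P.

Definition affine_blocking (F : finFieldType) (k s : nat)
    (B : 'rV[F]_k -> Prop) : Prop :=
  forall (U : {vspace 'rV[F]_k}) (a : 'rV[F]_k), \dim U = (k - s)%N ->
    exists u : 'rV[F]_k, u \in U /\ B (a + u).

(* Main.v *)
Require Import Defs.
From HB Require Import structures.
From mathcomp Require Import all_boot all_order all_algebra all_field.
From mathcomp Require Import zify.
Local Open Scope ring_scope.
Import GRing.Theory.

Lemma dim_rV (F : fieldType) (k : nat) : \dim (fullv : {vspace 'rV[F]_k}) = k.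
Proof. by rewrite dimvf /dim /= mul1n. Qed.

Lemma dim_add_line (K : fieldType) (vT : vectType K) (S : {vspace vT}) v :
  v \notin S -> \dim (S + <[v]>)%VS = (\dim S).+1.
Proof.
move=> vS.
have H := dimv_sum_cap S <[v]>.
have h1 : (\dim <[v]> <= 1)%N by rewrite dim_vline leq_b1.
have h2 : (\dim S < \dim (S + <[v]>))%N.
  rewrite (ltn_leqif (dimv_leqif_sup (addvSl S <[v]>))) subv_add subvv /=.
  by rewrite -memvE.
move: H h1 h2; lia.
Qed.

Lemma dim_add_le (K : fieldType) (vT : vectType K) (S : {vspace vT}) v :
  (\dim (S + <[v]>)%VS <= (\dim S).+1)%N.
Proof.
have H := dimv_sum_cap S <[v]>.
have h1 : (\dim <[v]> <= 1)%N by rewrite dim_vline leq_b1.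
move: H h1; lia.
Qed.

Lemma exists_mid (K : fieldType) (vT : vectType K) (W : {vspace vT}) n :
  forall m (S : {vspace vT}), (n - \dim S)%N = m -> (S <= W)%VS ->
  (\dim S <= n <= \dim W)%N ->
  exists U : {vspace vT}, [/\ (S <= U)%VS, (U <= W)%VS & \dim U = n].
Proof.
elim=> [|m IH] S Hm SW /andP[h1 h2].
  by exists S; split => //; lia.
have /subvPn [v vW vS] : ~~ (W <= S)%VS.
  apply/negP => /dimvS; lia.
have hd := @dim_add_line _ _ S v vS.
have [|||U [h3 h4 h5]] := IH (S + <[v]>)%VS.
- lia.
- by rewrite subv_add SW -memvE.
- rewrite hd; apply/andP; split; lia.
exists U; split => //.
exact: subv_trans (addvSl _ _) h3.
Qed.

Theorem lemma1p2 (F : finFieldType) (k s : nat)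
    (L : pred {vspace 'rV[F]_k})
    (HL : forall P, P \in L -> is_point P)
    (Hs1 : (1 <= s)%N) (Hsk : (s <= k)%N) :
  @strong_blocking F k (s - 1)%N L <-> @affine_blocking F k s (@union_points F k L).
Proof.
have Hks : (k - (s - 1) = (k - s).+1)%N by lia.
split.
- move=> SB U a dU.
  have dUa : (\dim (U + <[a]>)%VS <= (k - s).+1)%N.
    by rewrite -dU; apply: dim_add_le.
  have [|W [h1 h2 h3]] := @exists_mid _ _ fullv (k - s).+1 _ _ (refl_equal _) (subvf (U + <[a]>)%VS).
  + by rewrite dUa dim_rV; lia.
  have Wsp := SB W (etrans h3 (esym Hks)).
  have UW : (U <= W)%VS by apply: subv_trans (addvSl _ _) h1.
  have aW : a \in W by rewrite memvE; apply: subv_trans (addvSr _ _) h1.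
  have : ~~ (W <= U)%VS by apply/negP => /dimvS; lia.
  rewrite -{1}Wsp => /negP Hn.
  have [v /andP [vL vW] vU] : exists2 v, (<[v]>%VS \in L) && (v \in W) & v \notin U.
    apply/exists_inP; apply: contraT; rewrite negb_exists_in => /forall_inP Hall.
    exfalso; apply: Hn; apply/subv_sumP => v Hv.
    by have := Hall v Hv; rewrite negbK -memvE.
  have eW : (U + <[v]>)%VS = W.
    apply/eqP; rewrite eqEdim subv_add UW -memvE vW /= h3 (@dim_add_line _ _ U v) //; lia.
  move: aW; rewrite -eW => /memv_addP [u0 u0U [w wv ->]].
  exists (- u0); split; first by rewrite memvN.
  exists <[v]>%VS; split => //.
  by rewrite addrC addKr.
- move=> AB W dW.
  set S := span_of_points_in L W.
  have SW : (S <= W)%VS.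
    by apply/subv_sumP => v /andP [_ vW]; rewrite -memvE.
  apply: subv_anti; rewrite SW /=.
  apply: contraT => nWS.
  have hlt : (\dim S < \dim W)%N by rewrite (ltn_leqif (dimv_leqif_sup SW)).
  have [|U [h1 h2 h3]] := @exists_mid _ _ W (k - s)%N _ _ (refl_equal _) SW.
  + apply/andP; split; lia.
  have /subvPn [a aW aU] : ~~ (W <= U)%VS by apply/negP => /dimvS; lia.
  have [u [uU [P [PL xP]]]] := AB U a h3.
  have uW : u \in W by move/subvP: h2; apply.
  have xW : a + u \in W by rewrite memvD.
  have xU : a + u \notin U.
    by apply: contra aU => xU; rewrite -(addrK u a) memvB.
  have x0 : a + u != 0 by apply: contra xU => /eqP ->; rewrite mem0v.
  have eP : P = <[a + u]>%VS.
    apply/eqP; rewrite eq_sym eqEdim -memvE xP /= dim_vline x0.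
    by move/eqP: (HL P PL) ->.
  have : a + u \in S.
    rewrite memvE /S /span_of_points_in.
    by apply: (sumv_sup (a + u)) => //; rewrite -eP PL xW.
  by move/subvP: h1 => /[apply] /(negP xU).
Qed.
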